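(* Let $K$ be a commutative ring with identity, $n\ge 0$, and let $B,C$ be monoids such that $C$ is a retract of $B$, i.e. there are monoid homomorphisms $\psi:B\to C$ and $\phi:C\to B$ with $\psi\phi=\mathrm{id}_C$. If $B$ is left-$FP_n$ (resp. right-$FP_n$, bi-$FP_n$, weak bi-$FP_n$) over $K$, then so is $C$.
   Context: For a monoid $B$, $KB$ is the monoid ring with augmentation $\varepsilon:KB\to K$, $b\mapsto 1$. A module is of type $FP_n$ if there is an exact sequence $0\leftarrow M\leftarrow P_0\leftarrow\cdots\leftarrow P_n$ with $P_0,\dots,P_n$ finitely generated free modules. $B$ is left-$FP_n$ (resp. right-$FP_n$) if $K$ as a left (resp. right) $KB$-module via $\varepsilon$ is of type $FP_n$. $(KB,KB)$-bimodules are abelian groups with commuting left and right actions and $km=mk$ for $k\in K$; the free bimodule of rank $r$ is a direct sum of $r$ copies of $KB\otimes_K KB$ (action $a(u\otimes v)b=au\otimes vb$). $B$ is weak bi-$FP_n$ if the bimodule $K$ (action $a\cdot k\cdot a'=\varepsilon(a)k\varepsilon(a')$) has a partial resolution $0\leftarrow K\leftarrow F_0\leftarrow\cdots\leftarrow F_n$ by finitely generated free bimodules; $B$ is bi-$FP_n$ if the bimodule $KB$ (left and right multiplication) has such a partial resolution $0\leftarrow KB\leftarrow F_0\leftarrow\cdots\leftarrow F_n$. *)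

(* Defs.v *)
From HB Require Import structures.
From mathcomp Require Import all_boot all_algebra.
From mathcomp Require Import finmap monalg.

Set Implicit Arguments.
Unset Strict Implicit.
Unset Printing Implicit Defensive.

Import GRing.Theory.

Local Open Scope fset_scope.
Local Open Scope ring_scope.

Section MonoidConstructions.
Variable B : monoidType.

Definition mopp : Type := B.
HB.instance Definition _ := Choice.on mopp.
Definition mopp_mul (x y : mopp) : mopp := ((y : B) * (x : B))%g.
Fact mopp_mulA : associative mopp_mul.
Proof. by move=> x y z; rewrite /mopp_mul mulgA. Qed.
Fact mopp_mul1 : left_id (1%g : B) mopp_mul.
Proof. by move=> x; rewrite /mopp_mul mulg1. Qed.
Fact mopp_mulr1 : right_id (1%g : B) mopp_mul.
Proof. by move=> x; rewrite /mopp_mul mul1g. Qed.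
HB.instance Definition _ := isMonoid.Build mopp mopp_mulA mopp_mul1 mopp_mulr1.

Definition menv : Type := (B * B)%type.
HB.instance Definition _ := Choice.on menv.
Definition menv_mul (x y : menv) : menv := ((x.1 * y.1)%g, (y.2 * x.2)%g).
Definition menv_one : menv := (1%g, 1%g).
Fact menv_mulA : associative menv_mul.
Proof. by move=> [a a'] [b b'] [c c']; rewrite /menv_mul /= !mulgA. Qed.
Fact menv_mul1 : left_id menv_one menv_mul.
Proof. by move=> [a a']; rewrite /menv_mul /= mul1g mulg1. Qed.
Fact menv_mulr1 : right_id menv_one menv_mul.
Proof. by move=> [a a']; rewrite /menv_mul /= mul1g mulg1. Qed.
HB.instance Definition _ := isMonoid.Build menv menv_mulA menv_mul1 menv_mulr1.

End MonoidConstructions.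

Section MonoidRing.
Variables (K : comPzRingType) (B : monoidType).

Definition mring : Type := malg B K.
HB.instance Definition _ := GRing.Zmodule.on mring.

Implicit Types (g : mring) (k l : B).

Definition mr_one : mring := << (1 : K) *g (1%g : B) >>.

Local Notation "g1 *M_[ k1 , k2 ] g2" :=
  (<< g1@_k1 * g2@_k2 *g (k1 * k2)%g >> : mring)
  (at level 40, no associativity, format "g1  *M_[ k1 ,  k2 ]  g2").

Definition mr_mul g1 g2 : mring :=
  \sum_(k1 <- msupp g1) \sum_(k2 <- msupp g2) g1 *M_[k1, k2] g2.

Lemma mr_mullw (d1 d2 : {fset B}) g1 g2 :
  msupp g1 `<=` d1 -> msupp g2 `<=` d2 ->
  mr_mul g1 g2 = \sum_(k1 <- d1) \sum_(k2 <- d2) g1 *M_[k1, k2] g2.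
Proof.
move=> le_d1 le_d2; rewrite /mr_mul (big_fset_incl _ le_d1) /=.
  apply/eq_bigr=> k1 _; apply/big_fset_incl => // k _ /mcoeff_outdom ->.
  by rewrite mulr0 monalgU0.
move=> k _ /mcoeff_outdom g1k.
by rewrite big1 => // k' _; rewrite g1k mul0r monalgU0.
Qed.

Lemma mr_mulrw (d1 d2 : {fset B}) g1 g2 : msupp g1 `<=` d1 -> msupp g2 `<=` d2
  -> mr_mul g1 g2 = \sum_(k2 <- d2) \sum_(k1 <- d1) g1 *M_[k1, k2] g2.
Proof. by move=> le_d1 le_d2; rewrite (mr_mullw le_d1 le_d2) exchange_big. Qed.

Lemma mr_mul0g : left_zero 0 mr_mul.
Proof. by move=> g; rewrite /mr_mul msupp0 big_seq_fset0. Qed.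

Lemma mr_mulg0 : right_zero 0 mr_mul.
Proof.
by move=> g; rewrite /mr_mul exchange_big /= msupp0 big_seq_fset0.
Qed.

Lemma mr_mulUg c k g :
  mr_mul << c *g k >> g = \sum_(k' <- msupp g) << c * g@_k' *g (k * k')%g >>.
Proof.
rewrite (mr_mullw msuppU_le (fsubset_refl _)) big_seq_fset1.
by apply/eq_bigr => k' _; rewrite mcoeffUU.
Qed.

Lemma mr_mulgU c k g :
  mr_mul g << c *g k >> = \sum_(k' <- msupp g) << g@_k' * c *g (k' * k)%g >>.
Proof.
rewrite (mr_mulrw (fsubset_refl _) msuppU_le) big_seq_fset1.
by apply/eq_bigr=> k' _; rewrite mcoeffUU.
Qed.

Lemma mr_mulUU c1 c2 k1 k2 :
  mr_mul << c1 *g k1 >> << c2 *g k2 >> = << c1 * c2 *g (k1 * k2)%g >>.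
Proof. by rewrite (mr_mulrw msuppU_le msuppU_le) !big_seq_fset1 !mcoeffUU. Qed.

Lemma mr_mulEl1 g1 g2 :
  mr_mul g1 g2 = \sum_(k1 <- msupp g1) mr_mul << g1@_k1 *g k1 >> g2.
Proof. by apply/eq_bigr=> k _; rewrite mr_mulUg. Qed.

Lemma mr_mulEr1 g1 g2 :
  mr_mul g1 g2 = \sum_(k2 <- msupp g2) mr_mul g1 << g2@_k2 *g k2 >>.
Proof.
rewrite {1}/mr_mul exchange_big /=.
by apply/eq_bigr=> k _; rewrite (mr_mulgU (g2@_k) k g1).
Qed.

Lemma mr_mul1g : left_id mr_one mr_mul.
Proof.
move=> g; rewrite /mr_one mr_mulUg [RHS]monalgE.
by apply/eq_bigr=> kg _; rewrite mul1r mul1g.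
Qed.

Lemma mr_mulg1 : right_id mr_one mr_mul.
Proof.
move=> g; rewrite /mr_one mr_mulgU [RHS]monalgE.
by apply/eq_bigr=> k _; rewrite mulr1 mulg1.
Qed.

Lemma mr_mulgDl : left_distributive mr_mul +%R.
Proof.
move=> g1 g2 g.
rewrite [in RHS](@mr_mullw _ (msupp g) _ _ (fsubsetUl _ (msupp g2)) (fsubset_refl _)).
rewrite [in RHS](@mr_mullw _ (msupp g) _ _ (fsubsetUr (msupp g1) _) (fsubset_refl _)).
rewrite (@mr_mullw _ (msupp g) _ _ (msuppD_le _ _) (fsubset_refl _)).
rewrite -big_split /=; apply/eq_bigr=> k1 _.
rewrite -big_split /=; apply/eq_bigr=> k2 _.
by rewrite mcoeffD mulrDl monalgUD.
Qed.

Lemma mr_mulgDr : right_distributive mr_mul +%R.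
Proof.
move=> g g1 g2.
rewrite [in RHS](@mr_mulrw (msupp g) _ _ _ (fsubset_refl _) (fsubsetUl _ (msupp g2))).
rewrite [in RHS](@mr_mulrw (msupp g) _ _ _ (fsubset_refl _) (fsubsetUr (msupp g1) _)).
rewrite (@mr_mulrw (msupp g) _ _ _ (fsubset_refl _) (msuppD_le _ _)).
rewrite -big_split /=; apply/eq_bigr => k1 _.
rewrite -big_split /=; apply/eq_bigr => k2 _.
by rewrite mcoeffD mulrDr monalgUD.
Qed.

Lemma mr_mulA : associative mr_mul.
Proof.
move=> g1 g2 g3.
rewrite [RHS](big_morph (mr_mul^~ _) (fun _ _ => mr_mulgDl _ _ _) (mr_mul0g _)).
rewrite mr_mulEl1; apply/eq_bigr=> k1 _.
rewrite [LHS](big_morph (mr_mul _) (fun _ _ => mr_mulgDr _ _ _) (mr_mulg0 _)).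
rewrite [RHS](big_morph (mr_mul^~ _) (fun _ _ => mr_mulgDl _ _ _) (mr_mul0g _)).
apply/eq_bigr=> k2 _.
rewrite [LHS](big_morph (mr_mul _) (fun _ _ => mr_mulgDr _ _ _) (mr_mulg0 _)).
by rewrite mr_mulEr1; apply/eq_bigr=> k3 _; rewrite !mr_mulUU mulrA mulgA.
Qed.

HB.instance Definition _ := GRing.Zmodule_isPzRing.Build mring
  mr_mulA mr_mul1g mr_mulg1 mr_mulgDl mr_mulgDr.

Definition augm (g : mring) : K := \sum_(b <- msupp g) g@_b.

End MonoidRing.

(* A left R-module is given by an abelian group M with a scalar action  *)
(* [sc : R -> M -> M]; the finitely generated free left R-module of     *)
(* rank r is the row space 'rV[R]_r (with a *: v = (a * v_i)_i).        *)
(* M is of type FP_n if there is an exact sequence                     *)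
(*   0 <- M <-eps- P_0 <-d_0- P_1 <-d_1- ... <-d_(n-1)- P_n             *)
(* of R-linear maps with P_i = 'rV[R]_(r i) free of finite rank.        *)
Definition FPn (R : pzRingType) (M : zmodType) (sc : R -> M -> M) (n : nat)
  : Prop :=
  exists (r : nat -> nat) (eps : 'rV[R]_(r 0) -> M)
         (d : forall i : nat, 'rV[R]_(r i.+1) -> 'rV[R]_(r i)),
    (forall (a : R) (x y : 'rV[R]_(r 0)), eps (a *: x + y) = sc a (eps x) + eps y)
    /\ (forall i (a : R) (x y : 'rV[R]_(r i.+1)), d i (a *: x + y) = a *: d i x + d i y)
    /\ (forall m : M, exists x, eps x = m)
    /\ ((0 < n)%N -> forall x : 'rV[R]_(r 0), eps x = 0 <-> exists y, d 0 y = x)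
    /\ (forall i, (i.+1 < n)%N ->
          forall x : 'rV[R]_(r i.+1), d i x = 0 <-> exists y, d i.+1 y = x).

Section FinitenessProperties.
Variables (K : comPzRingType) (B : monoidType).

(* K as a (left) module over K[A] via the augmentation: a . k = eps(a) k *)
Definition triv_scale (A : monoidType) (a : mring K A) (k : K) : K := augm a * k.

Definition left_FPn (n : nat) : Prop := FPn (@triv_scale B) n.

(* right K B-modules = left K[B^op]-modules *)
Definition right_FPn (n : nat) : Prop := FPn (@triv_scale (mopp B)) n.

(* (K B, K B)-bimodules (with K acting centrally) = left modules over    *)
(* K[B x B^op] (= K B (x)_K (K B)^op), via (b, b') . m = b m b'.        *)
(* The free bimodule K B (x)_K K B of rank 1 corresponds to K[B x B^op]. *)
Definition weak_biFPn (n : nat) : Prop := FPn (@triv_scale (menv B)) n.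

Definition bimod_scale (e : mring K (menv B)) (x : mring K B) : mring K B :=
  \sum_(p <- msupp e)
     ((<< e@_p *g (p.1 : B) >> : mring K B) * x * (<< (1 : K) *g (p.2 : B) >> : mring K B)).

Definition biFPn (n : nat) : Prop := FPn bimod_scale n.

End FinitenessProperties.

(* Main.v *)
Require Import Defs.
From mathcomp Require Import all_boot all_algebra.
From mathcomp Require finmap monalg.
From Stdlib Require ClassicalEpsilon.

Module Helpers.
From HB Require Import structures.
Import finmap monalg ClassicalEpsilon.
Set Implicit Arguments.
Unset Strict Implicit.
Unset Printing Implicit Defensive.
Import GRing.Theory.
Local Open Scope ring_scope.

Definition pick (T : Type) (x0 : T) (P : T -> Prop) : T := epsilon (inhabits x0) P.
Lemma pickP (T : Type) (x0 : T) (P : T -> Prop) : (exists x, P x) -> P (pick x0 P).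
Proof. by move=> h; apply: epsilon_spec. Qed.

Section Lin.
Variables (A : pzRingType) (W : zmodType) (sc : A -> W -> W) (a : nat).
Variable f : 'rV[A]_a -> W.
Hypothesis fL : forall c x y, f (c *: x + y) = sc c (f x) + f y.
Hypothesis sc1 : forall w, sc 1 w = w.

Lemma linD x y : f (x + y) = f x + f y.
Proof. by rewrite -[x in LHS]scale1r fL sc1. Qed.
Lemma lin0 : f 0 = 0.
Proof. by apply: (@addrI _ (f 0)); rewrite -linD !addr0. Qed.
Lemma linsum (I : Type) (s : seq I) (P : pred I) (F : I -> 'rV[A]_a) :
  f (\sum_(j <- s | P j) F j) = \sum_(j <- s | P j) f (F j).
Proof. exact: (big_morph f linD lin0). Qed.
Lemma linN x : f (- x) = - f x.
Proof. by apply: (@addIr _ (f x)); rewrite -linD !addNr lin0. Qed.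
Lemma linB x y : f (x - y) = f x - f y.
Proof. by rewrite linD linN. Qed.
Lemma linZ c x : f (c *: x) = sc c (f x).
Proof. by rewrite -[c *: x]addr0 fL lin0 addr0. Qed.
Lemma linE x : f x = \sum_(j < a) sc (x 0 j) (f (delta_mx 0 j)).
Proof. by rewrite {1}(row_sum_delta x) linsum; apply: eq_bigr => j _; rewrite linZ. Qed.
End Lin.

Section LinMx.
Variables (A : pzRingType) (a b : nat) (f : 'rV[A]_a -> 'rV[A]_b).
Hypothesis fL : forall c x y, f (c *: x + y) = c *: f x + f y.
Definition matof : 'M[A]_(a, b) := \matrix_(j, l) (f (delta_mx 0 j)) 0 l.
Lemma matofE x : f x = x *m matof.
Proof.
rewrite (linE fL (@scale1r _ _)) mulmx_sum_row; apply: eq_bigr => j _.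
congr (_ *: _); apply/rowP => l; rewrite !mxE //.
Qed.
End LinMx.
Section Main.
Variables (R S : pzRingType) (Phi : {rmorphism S -> R}) (Psi : {rmorphism R -> S}).
Hypothesis PsiPhi : forall s, Psi (Phi s) = s.
Variables (N M : zmodType) (scN : R -> N -> N) (scM : S -> M -> M) (i : M -> N) (p : N -> M).
Hypotheses (iD : {morph i : x y / x + y}) (pD : {morph p : x y / x + y}).
Hypotheses (i_sc : forall s m, i (scM s m) = scN (Phi s) (i m))
  (p_sc : forall r x, p (scN r x) = scM (Psi r) (p x))
  (pi : forall m, p (i m) = m) (scM1 : forall m, scM 1 m = m) (scN1 : forall x, scN 1 x = x).

Variables (n : nat) (r : nat -> nat) (eps : 'rV[R]_(r 0) -> N)
  (d : forall k, 'rV[R]_(r k.+1) -> 'rV[R]_(r k)).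
Hypotheses (epsL : forall a x y, eps (a *: x + y) = scN a (eps x) + eps y)
  (dL : forall k a (x y : 'rV[R]_(r k.+1)), d (a *: x + y) = a *: d x + d y)
  (epsS : forall m, exists x, eps x = m)
  (ex0 : (0 < n)%N -> forall x, eps x = 0 <-> exists y, @d 0 y = x)
  (exS : forall k, (k.+1 < n)%N -> forall x, @d k x = 0 <-> exists y, @d k.+1 y = x).

Lemma i0 : i 0 = 0.
Proof. by apply: (@addrI _ (i 0)); rewrite -iD !addr0. Qed.
Lemma p0 : p 0 = 0.
Proof. by apply: (@addrI _ (p 0)); rewrite -pD !addr0. Qed.
Lemma isum (I : Type) (s : seq I) (F : I -> M) : i (\sum_(j <- s) F j) = \sum_(j <- s) i (F j).
Proof. exact: (big_morph i iD i0). Qed.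
Lemma psum (I : Type) (s : seq I) (F : I -> N) : p (\sum_(j <- s) F j) = \sum_(j <- s) p (F j).
Proof. exact: (big_morph p pD p0). Qed.

Definition Dm k : 'M[R]_(r k.+1, r k) := matof (@d k).
Lemma dE k x : @d k x = x *m Dm k.
Proof. exact: matofE. Qed.

Fixpoint rp k : nat := match k with 0 => r 0 | k'.+1 => (r k'.+1 + rp k')%N end.

Definition eps' (z : 'rV[S]_(r 0)) : M := p (eps (map_mx Phi z)).

Lemma eps'L a x y : eps' (a *: x + y) = scM a (eps' x) + eps' y.
Proof. by rewrite /eps' map_mxD map_mxZ epsL pD p_sc PsiPhi. Qed.

Lemma eps'Psi v : eps' (map_mx Psi v) = p (eps v).
Proof.
rewrite /eps' (linE epsL scN1) [in RHS](linE epsL scN1) !psum.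
by apply: eq_bigr => j _; rewrite !p_sc !mxE PsiPhi.
Qed.

Definition B0 : 'M[R]_(r 0, r 0) :=
  \matrix_(j, l) (pick 0 (fun y => eps y = i (eps' (delta_mx 0 j)))) 0 l.

Lemma B0row j : eps (row j B0) = i (eps' (delta_mx 0 j)).
Proof.
have -> : row j B0 = pick 0 (fun y => eps y = i (eps' (delta_mx 0 j))).
  by apply/rowP => l; rewrite !mxE.
exact: (@pickP _ 0 (fun y => eps y = i (eps' (delta_mx 0 j))) (epsS _)).
Qed.

Lemma epsB0 z : eps (map_mx Phi z *m B0) = i (eps' z).
Proof.
rewrite mulmx_sum_row (linsum epsL scN1) [in RHS](linE eps'L scM1) isum.
by apply: eq_bigr => j _; rewrite (linZ epsL scN1) B0row mxE i_sc.
Qed.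

Definition lift k (u : 'rV[R]_(r k)) : 'rV[R]_(r k.+1) := pick 0 (fun y => y *m Dm k = u).
Definition liftM k m (X : 'M[R]_(m, r k)) : 'M[R]_(m, r k.+1) :=
  \matrix_(j, l) (lift (row j X)) 0 l.

Lemma liftME k m (X : 'M[R]_(m, r k)) :
  (forall j, exists y, y *m Dm k = row j X) -> liftM X *m Dm k = X.
Proof.
move=> h; apply/row_matrixP => j; rewrite row_mul.
have -> : row j (liftM X) = lift (row j X) by apply/rowP => l; rewrite !mxE.
exact: (pickP 0 (h j)).
Qed.

Definition Am k : 'M[S]_(r k, rp k) :=
  match k return 'M[S]_(r k, rp k) with 0 => 1%:M | k'.+1 => row_mx 1%:M 0 end.
Definition HH k : 'M[S]_(rp k, rp k.+1) := row_mx 0 1%:M.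

Definition Enext k (B' : 'M[R]_(rp k.+1, r k.+1)) (E : 'M[S]_(rp k.+1, rp k)) :
  'M[S]_(rp k.+2, rp k.+1) :=
  col_mx (map_mx Psi (Dm k.+1) *m Am k.+1) (map_mx Psi B' *m Am k.+1 - 1%:M - E *m HH k).

Fixpoint st k : 'M[R]_(rp k, r k) * 'M[S]_(rp k.+1, rp k) :=
  match k with
  | 0 => (B0, col_mx (map_mx Psi (Dm 0) *m Am 0) (map_mx Psi B0 *m Am 0 - 1%:M))
  | k'.+1 => let s := st k' in
             let B' := liftM (map_mx Phi s.2 *m s.1) in (B', Enext B' s.2)
  end.

Definition Bm k := (st k).1.
Definition Em k := (st k).2.

Definition Wm k : 'M[S]_(rp k, rp k) :=
  match k return 'M[S]_(rp k, rp k) with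
  | 0 => map_mx Psi (Bm 0) *m Am 0 - 1%:M
  | k'.+1 => map_mx Psi (Bm k'.+1) *m Am k'.+1 - 1%:M - Em k' *m HH k'
  end.

Lemma EmE k : Em k = col_mx (map_mx Psi (Dm k) *m Am k) (Wm k).
Proof. by case: k. Qed.
Lemma BmS k : Bm k.+1 = liftM (map_mx Phi (Em k) *m Bm k).
Proof. by []. Qed.
Lemma Bm0 : Bm 0 = B0.
Proof. by []. Qed.

Lemma AE k : Am k.+1 *m Em k = map_mx Psi (Dm k) *m Am k.
Proof. by rewrite EmE /Am mul_row_col mul1mx mul0mx addr0. Qed.
Lemma HE k : HH k *m Em k = Wm k.
Proof. by rewrite EmE /HH mul_row_col mul1mx mul0mx add0r. Qed.

Lemma PsiPhiM m1 m2 (X : 'M[S]_(m1, m2)) : map_mx Psi (map_mx Phi X) = X.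
Proof. by apply/matrixP => a b; rewrite !mxE PsiPhi. Qed.

Definition zcond k m (z : 'M[S]_(m, rp k)) : Prop :=
  (match k return 'M[S]_(m, rp k) -> Prop with 0 => fun _ => True
   | k'.+1 => fun z => z *m Em k' = 0 end) z.

Lemma zW k m (z : 'M[S]_(m, rp k)) : zcond z ->
  z *m Wm k = z *m map_mx Psi (Bm k) *m Am k - z.
Proof.
case: k z => [|k] z; rewrite /zcond => hz.
  by rewrite /Wm mulmxBr mulmx1 mulmxA.
by rewrite /Wm !mulmxBr mulmx1 !mulmxA hz mul0mx subr0.
Qed.

Definition F1 k := Bm k.+1 *m Dm k = map_mx Phi (Em k) *m Bm k.
Definition EE k := Em k.+1 *m Em k = 0.
Definition E0 := forall y, eps' (y *m Em 0) = 0.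

Lemma DD k : (k.+1 < n)%N -> Dm k.+1 *m Dm k = 0.
Proof.
move=> lt; apply/row_matrixP => j; rewrite row0 row_mul.
have -> : row j (Dm k.+1) = @d k.+1 (delta_mx 0 j).
  by rewrite dE -rowE.
rewrite -dE; apply/(exS lt); by exists (delta_mx 0 j).
Qed.

Lemma Am0 : Am 0 = 1%:M. Proof. by []. Qed.

Lemma E0P : (0 < n)%N -> E0.
Proof.
move=> n0 y; rewrite -(hsubmxK y) EmE mul_row_col (linD eps'L scM1).
rewrite Am0 mulmx1 -[lsubmx y]PsiPhiM -map_mxM eps'Psi -dE.
have -> : eps (@d 0 (map_mx Phi (lsubmx y))) = 0 by apply/(ex0 n0); eexists.
rewrite p0 add0r (zW (k := 0)) // Am0 mulmx1 (linB eps'L scM1).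
rewrite -[rsubmx y in X in eps' (X *m _)]PsiPhiM -map_mxM eps'Psi Bm0 epsB0 pi.
by rewrite subrr.
Qed.

Lemma F1_0 : (0 < n)%N -> F1 0.
Proof.
move=> n0; rewrite /F1 BmS; apply: liftME => j.
rewrite row_mul -map_row Bm0.
have : eps (map_mx Phi (row j (Em 0)) *m B0) = 0.
  by rewrite epsB0 rowE E0P // i0.
by case/(ex0 n0) => y <-; exists y; rewrite dE.
Qed.

Lemma rowEE k m1 (X : 'M[R]_(m1, r k.+1)) : X *m Dm k = 0 -> (k.+1 < n)%N ->
  forall j : 'I_m1, exists y, y *m Dm k.+1 = row j X.
Proof.
move=> hX lt j.
have : @d k (row j X) = 0 by rewrite dE -row_mul hX row0.
by case/(exS lt) => y <-; exists y; rewrite dE.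
Qed.

Lemma F1_S k : (k.+1 < n)%N -> F1 k -> EE k -> F1 k.+1.
Proof.
move=> lt h1 h2; rewrite /F1 BmS; apply: liftME; apply: rowEE => //.
by rewrite -mulmxA h1 mulmxA -map_mxM h2 map_mx0 mul0mx.
Qed.

Lemma EE_gen k : (k.+1 < n)%N -> F1 k -> zcond (Em k) -> EE k.
Proof.
move=> lt h1 hz; rewrite /EE {1}EmE mul_col_mx.
rewrite -mulmxA AE mulmxA -map_mxM DD // map_mx0 mul0mx.
have -> : Wm k.+1 = map_mx Psi (Bm k.+1) *m Am k.+1 - 1%:M - Em k *m HH k by [].
rewrite !mulmxBl mul1mx -!mulmxA HE AE (zW hz) mulmxA -map_mxM h1 map_mxM PsiPhiM.
by rewrite subrr col_mx0.
Qed.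

Lemma Good k : ((k < n)%N -> F1 k) /\ ((k.+1 < n)%N -> EE k).
Proof.
elim: k => [|k [IH1 IH2]].
  have h0 : (0 < n)%N -> F1 0 by apply: F1_0.
  split=> // lt; apply: EE_gen => //; apply: h0; exact: ltn_trans lt.
have h1 : (k.+1 < n)%N -> F1 k.+1.
  move=> lt; apply: F1_S => //; [apply: IH1 | apply: IH2] => //; exact: ltnW.
split=> // lt; apply: EE_gen => //; first by apply: h1; exact: ltnW.
by apply: IH2; exact: ltnW.
Qed.

Lemma core k (z : 'rV[S]_(rp k)) (y : 'rV[R]_(r k.+1)) : zcond z ->
  y *m Dm k = map_mx Phi z *m Bm k -> row_mx (map_mx Psi y) (-z) *m Em k = z.
Proof.
move=> hz hy; rewrite EmE mul_row_col mulNmx (zW hz) mulmxA -map_mxM hy map_mxM PsiPhiM.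
by rewrite opprB addrC subrK.
Qed.

Lemma exact0 : (0 < n)%N -> forall z : 'rV[S]_(rp 0), eps' z = 0 -> exists y, y *m Em 0 = z.
Proof.
move=> n0 z hz.
have : eps (map_mx Phi z *m B0) = 0 by rewrite epsB0 hz i0.
case/(ex0 n0) => y hy; eexists; apply: (core (k := 0)) => //.
by rewrite -hy dE.
Qed.

Lemma exactS k : (k.+1 < n)%N -> forall z : 'rV[S]_(rp k.+1), z *m Em k = 0 ->
  exists y, y *m Em k.+1 = z.
Proof.
move=> lt z hz.
have : @d k (map_mx Phi z *m Bm k.+1) = 0.
  rewrite dE -mulmxA (proj1 (Good k)); last exact: ltnW.
  by rewrite mulmxA -map_mxM hz map_mx0 mul0mx.
case/(exS lt) => y hy; eexists; apply: (core (k := k.+1)) => //.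
by rewrite -hy dE.
Qed.

Lemma FPn_M : FPn scM n.
Proof.
exists rp, eps', (fun k (x : 'rV[S]_(rp k.+1)) => x *m Em k).
split; first exact: eps'L.
split; first by move=> k a x y; rewrite mulmxDl scalemxAl.
split; first by move=> m; case: (epsS (i m)) => y hy; exists (map_mx Psi y); rewrite eps'Psi hy pi.
split.
  move=> n0 x; split; first exact: exact0.
  by case=> y <-; apply: E0P.
move=> k lt x; split; first exact: exactS.
by case=> y <-; rewrite -mulmxA (proj2 (Good k) lt) mulmx0.
Qed.

End Main.
Section MonoidRingMaps.
Variable K : comPzRingType.

Lemma sum_incl (B : choiceType) (V : zmodType) (g : {malg K[B]}) (F : B -> K -> V)
  (dd : {fset B}) : (forall b, F b 0 = 0) -> (msupp g `<=` dd)%fset ->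
  \sum_(b <- msupp g) F b g@_b = \sum_(b <- dd) F b g@_b.
Proof.
move=> F0 le; apply: big_fset_incl => // b _ /mcoeff_outdom ->; exact: F0.
Qed.

Lemma mulE (B : monoidType) (g1 g2 : mring K B) : g1 * g2 = mr_mul g1 g2.
Proof. by []. Qed.
Lemma oneE (B : monoidType) : 1 = mr_one K B :> mring K B.
Proof. by []. Qed.

Section Map.
Variables (B C : monoidType) (f : B -> C).

Definition mmap (g : mring K B) : mring K C := \sum_(b <- msupp g) << g@_b *g f b >>.

Lemma mmapw (dd : {fset B}) g : (msupp g `<=` dd)%fset ->
  mmap g = \sum_(b <- dd) << g@_b *g f b >>.
Proof. by move=> le; apply: (sum_incl (F := fun b c => << c *g f b >>)) => // b; rewrite monalgU0. Qed.

Lemma mmapB : zmod_morphism mmap.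
Proof.
move=> g1 g2.
rewrite (@mmapw (msupp g1 `|` msupp g2)%fset (g1 - g2)) ?msuppB_le //.
rewrite (@mmapw (msupp g1 `|` msupp g2)%fset g1) ?fsubsetUl //.
rewrite (@mmapw (msupp g1 `|` msupp g2)%fset g2) ?fsubsetUr //.
rewrite -sumrB; apply: eq_bigr => b _; by rewrite mcoeffB monalgUB.
Qed.

Lemma mmapU c b : mmap << c *g b >> = << c *g f b >>.
Proof. by rewrite (mmapw msuppU_le) big_seq_fset1 mcoeffUU. Qed.

Lemma mmapD : {morph mmap : x y / x + y}.
Proof.
move=> g1 g2.
rewrite (@mmapw (msupp g1 `|` msupp g2)%fset (g1 + g2)) ?msuppD_le //.
rewrite (@mmapw (msupp g1 `|` msupp g2)%fset g1) ?fsubsetUl //.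
rewrite (@mmapw (msupp g1 `|` msupp g2)%fset g2) ?fsubsetUr //.
rewrite -big_split; apply: eq_bigr => b _; by rewrite mcoeffD monalgUD.
Qed.
Lemma mmap0 : mmap 0 = 0.
Proof. by rewrite /mmap msupp0 big_seq_fset0. Qed.

Lemma mmap_sum (I : Type) (s : seq I) (F : I -> mring K B) :
  mmap (\sum_(j <- s) F j) = \sum_(j <- s) mmap (F j).
Proof. exact: (big_morph mmap mmapD mmap0). Qed.

Hypothesis fM : monoid.monoid_morphism f.

Lemma mmap1 : mmap 1 = 1.
Proof. by rewrite oneE /mr_one mmapU fM.1. Qed.

Lemma mmapM : {morph mmap : x y / x * y}.
Proof.
move=> g1 g2.
have -> : mmap g1 * mmap g2 = \sum_(k1 <- msupp g1) \sum_(k2 <- msupp g2)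
    ((<< g1@_k1 *g f k1 >> : mring K C) * << g2@_k2 *g f k2 >>).
  by rewrite /mmap mulr_suml; apply: eq_bigr => k1 _; rewrite mulr_sumr.
rewrite mulE /mr_mul mmap_sum; apply: eq_bigr => k1 _.
rewrite mmap_sum; apply: eq_bigr => k2 _.
by rewrite mmapU mulE mr_mulUU fM.2.
Qed.

End Map.

Lemma mmap_comp (B C : monoidType) (f : B -> C) (g : C -> B) :
  (forall c, f (g c) = c) -> forall x : mring K C, mmap f (mmap g x) = x.
Proof.
move=> fg x; rewrite {2}/mmap mmap_sum [RHS]monalgE; apply: eq_bigr => c _.
by rewrite mmapU fg.
Qed.

Lemma augmw (B : monoidType) (dd : {fset B}) (g : mring K B) :
  (msupp g `<=` dd)%fset -> augm g = \sum_(b <- dd) g@_b.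
Proof. by move=> le; apply: (sum_incl (F := fun b c => c)). Qed.

Lemma augmD (B : monoidType) : {morph (@augm K B) : x y / x + y}.
Proof.
move=> g1 g2.
rewrite (@augmw _ (msupp g1 `|` msupp g2)%fset (g1 + g2)) ?msuppD_le //.
rewrite (@augmw _ (msupp g1 `|` msupp g2)%fset g1) ?fsubsetUl //.
rewrite (@augmw _ (msupp g1 `|` msupp g2)%fset g2) ?fsubsetUr //.
rewrite -big_split; apply: eq_bigr => b _; by rewrite mcoeffD.
Qed.
Lemma augm0 (B : monoidType) : augm (0 : mring K B) = 0.
Proof. by rewrite /augm msupp0 big_seq_fset0. Qed.
Lemma augmU (B : monoidType) c (b : B) : augm (<< c *g b >> : mring K B) = c.
Proof. by rewrite (augmw msuppU_le) big_seq_fset1 mcoeffUU. Qed.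
Lemma augm1 (B : monoidType) : augm (1 : mring K B) = 1.
Proof. by rewrite oneE augmU. Qed.
Lemma augm_mmap (B C : monoidType) (f : B -> C) g : augm (mmap f g) = augm g.
Proof.
rewrite /mmap (big_morph _ (@augmD C) (@augm0 C)); apply: eq_bigr => b _.
by rewrite augmU.
Qed.

End MonoidRingMaps.
Lemma retract_FPn (R S : pzRingType) (Phi : {rmorphism S -> R}) (Psi : {rmorphism R -> S})
  (PsiPhi : forall s, Psi (Phi s) = s) (N M : zmodType) (scN : R -> N -> N) (scM : S -> M -> M)
  (i : M -> N) (p : N -> M) (iD : {morph i : x y / x + y}) (pD : {morph p : x y / x + y})
  (i_sc : forall s m, i (scM s m) = scN (Phi s) (i m))
  (p_sc : forall r x, p (scN r x) = scM (Psi r) (p x))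
  (pi : forall m, p (i m) = m) (scM1 : forall m, scM 1 m = m) (scN1 : forall x, scN 1 x = x)
  (n : nat) : FPn scN n -> FPn scM n.
Proof.
case=> r [eps [d [h1 [h2 [h3 [h4 h5]]]]]].
exact: (@FPn_M R S Phi Psi PsiPhi N M scN scM i p iD pD i_sc p_sc pi scM1 scN1 n r eps d h1 h2 h3 h4 h5).
Qed.

Section Concrete.
Variable K : comPzRingType.

Definition mmapR (B C : monoidType) (f : B -> C) (fM : monoid.monoid_morphism f) :
  {rmorphism mring K B -> mring K C} :=
  HB.pack (mmap f) (GRing.isZmodMorphism.Build _ _ (mmap f) (@mmapB K B C f))
    (GRing.isMonoidMorphism.Build _ _ (mmap f) (@mmap1 K B C f fM, @mmapM K B C f fM)).

Lemma mmapRE B C f fM (x : mring K B) : @mmapR B C f fM x = mmap f x.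
Proof. by []. Qed.


Lemma mopp_morph (B C : monoidType) (f : B -> C) :
  monoid.monoid_morphism f -> monoid.monoid_morphism (f : mopp B -> mopp C).
Proof. by case=> f1 fM; split=> // x y; rewrite /= /mopp_mul fM. Qed.

Definition fenv (B C : monoidType) (f : B -> C) (q : menv B) : menv C := (f q.1, f q.2).

Lemma menv_morph (B C : monoidType) (f : B -> C) :
  monoid.monoid_morphism f -> monoid.monoid_morphism (fenv f).
Proof.
case=> f1 fM; split; first by rewrite /fenv /= f1.
by move=> x y; rewrite /fenv /= /menv_mul /= !fM.
Qed.

Lemma triv_hyps (A1 A2 : monoidType) (F : mring K A1 -> mring K A2) :
  (forall g, augm (F g) = augm g) ->
  forall r (x : K), triv_scale r x = triv_scale (F r) x.
Proof. by move=> h r x; rewrite /triv_scale h. Qed.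

Lemma triv1 (A : monoidType) (x : K) : triv_scale (1 : mring K A) x = x.
Proof. by rewrite /triv_scale augm1 mul1r. Qed.

Lemma triv_case (B C : monoidType) (psi : B -> C) (phi : C -> B)
  (psiM : monoid.monoid_morphism psi) (phiM : monoid.monoid_morphism phi)
  (h : forall c, psi (phi c) = c) n :
  FPn (@triv_scale K B) n -> FPn (@triv_scale K C) n.
Proof.
have H := (@retract_FPn (mring K B) (mring K C) (mmapR phiM) (mmapR psiM) _ K K
  (@triv_scale K B) (@triv_scale K C) id id).
apply: H => //.
- by move=> s; rewrite !mmapRE mmap_comp.
- by move=> s m; rewrite mmapRE /triv_scale augm_mmap.
- by move=> s m; rewrite mmapRE /triv_scale augm_mmap.
- exact: triv1.
- exact: triv1.
Qed.


Section Bimod.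
Variable B : monoidType.

Lemma bsw (dd : {fset menv B}) (e : mring K (menv B)) (x : mring K B) :
  (msupp e `<=` dd)%fset -> bimod_scale e x =
  \sum_(q <- dd) (<< e@_q *g (q.1 : B) >> : mring K B) * x * << (1 : K) *g (q.2 : B) >>.
Proof.
move=> le; rewrite /bimod_scale.
apply: (sum_incl (F := fun q c => (<< c *g (q.1 : B) >> : mring K B) * x * << (1 : K) *g (q.2 : B) >>)) => //.
by move=> q; rewrite monalgU0 !mul0r.
Qed.

Lemma bsD (x : mring K B) : {morph (fun e => bimod_scale e x) : e1 e2 / e1 + e2}.
Proof.
move=> g1 g2 /=.
rewrite (@bsw (msupp g1 `|` msupp g2)%fset (g1 + g2)) ?msuppD_le //.
rewrite (@bsw (msupp g1 `|` msupp g2)%fset g1) ?fsubsetUl //.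
rewrite (@bsw (msupp g1 `|` msupp g2)%fset g2) ?fsubsetUr //.
by rewrite -big_split; apply: eq_bigr => b _; rewrite mcoeffD monalgUD mulrDl mulrDl.
Qed.

Lemma bs0 (x : mring K B) : bimod_scale 0 x = 0.
Proof. by rewrite /bimod_scale msupp0 big_seq_fset0. Qed.

Lemma bsU c (q : menv B) (x : mring K B) :
  bimod_scale << c *g q >> x = (<< c *g (q.1 : B) >> : mring K B) * x * << (1 : K) *g (q.2 : B) >>.
Proof. by rewrite (bsw _ msuppU_le) big_seq_fset1 mcoeffUU. Qed.

Lemma bs1 (x : mring K B) : bimod_scale 1 x = x.
Proof. rewrite oneE /mr_one bsU /=; change ((1 : mring K B) * x * 1 = x); by rewrite mul1r mulr1. Qed.

End Bimod.

Lemma bs_mmap (B C : monoidType) (f : B -> C) (fM : monoid.monoid_morphism f)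
  (e : mring K (menv B)) (x : mring K B) :
  mmap f (bimod_scale e x) = bimod_scale (mmap (fenv f) e) (mmap f x).
Proof.
rewrite {1}/bimod_scale mmap_sum [mmap (fenv f) e]/mmap (big_morph _ (@bsD C _) (@bs0 C _)).
apply: eq_bigr => q _; rewrite bsU.
by rewrite !(mmapM fM) !mmapU.
Qed.

Lemma bi_case (B C : monoidType) (psi : B -> C) (phi : C -> B)
  (psiM : monoid.monoid_morphism psi) (phiM : monoid.monoid_morphism phi)
  (h : forall c, psi (phi c) = c) n :
  biFPn K B n -> biFPn K C n.
Proof.
have H := (@retract_FPn (mring K (menv B)) (mring K (menv C)) (mmapR (menv_morph phiM))
  (mmapR (menv_morph psiM)) _ (mring K B) (mring K C)
  (@bimod_scale K B) (@bimod_scale K C) (mmap phi) (mmap psi)).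
apply: H => //.
- by move=> s; rewrite !mmapRE mmap_comp // => -[a b]; rewrite /fenv /= !h.
- exact: mmapD.
- exact: mmapD.
- by move=> s m; rewrite mmapRE (bs_mmap phiM).
- by move=> s m; rewrite mmapRE (bs_mmap psiM).
- exact: mmap_comp.
- exact: bs1.
- exact: bs1.
Qed.

End Concrete.
End Helpers.

Theorem theorem3 (K : comPzRingType) (n : nat) (B C : monoidType)
    (psi : B -> C) (phi : C -> B) :
  monoid_morphism psi -> monoid_morphism phi ->
  (forall c : C, psi (phi c) = c) ->
  (left_FPn K B n -> left_FPn K C n) /\
  (right_FPn K B n -> right_FPn K C n) /\
  (biFPn K B n -> biFPn K C n) /\
  (weak_biFPn K B n -> weak_biFPn K C n).
Proof.
move=> psiM phiM h.
split; first exact: (Helpers.triv_case psiM phiM h).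
split.
  exact: (@Helpers.triv_case K (mopp B) (mopp C) psi phi
            (Helpers.mopp_morph psiM) (Helpers.mopp_morph phiM) h).
split; first exact: (Helpers.bi_case psiM phiM h).
apply: (@Helpers.triv_case K (menv B) (menv C) (Helpers.fenv psi) (Helpers.fenv phi)
          (Helpers.menv_morph psiM) (Helpers.menv_morph phiM)).
by case=> a b; rewrite /Helpers.fenv /= !h.
Qed.
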